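(* For any permutation $\sigma\in\mathrm{Sym}(n)$, the cyclic group $G=\langle\sigma\rangle\leq\mathrm{Sym}(n)$, with its natural action on $\{1,\dots,n\}$, has the strict EKR property.
   Context: Two permutations $\pi,\tau\in G$ intersect if $\pi\tau^{-1}$ has a fixed point in $\{1,\dots,n\}$. A subset of $G$ is intersecting if every pair of its elements intersect. $G$ has the EKR property if every intersecting subset of $G$ has size at most the size of the largest point-stabilizer in $G$. $G$ has the strict EKR property if it has the EKR property and the only intersecting subsets of maximum size in $G$ are the cosets of the (largest) point-stabilizers. *)

(* Defs.v *)
From mathcomp Require Import all_boot all_fingroup.
Set Implicit Arguments. Unset Strict Implicit. Unset Printing Implicit Defensive.
Import GroupScope.

(* pi and tau intersect iff pi * tau^-1 has a fixed point in {0,...,n-1}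
   (mathcomp's product: (p * t) x = t (p x)). *)
Definition perm_intersect (n : nat) (p t : {perm 'I_n}) : bool :=
  [exists i : 'I_n, (p * t^-1) i == i].

Definition intersecting (n : nat) (G S : {set {perm 'I_n}}) : bool :=
  (S \subset G) && [forall p in S, forall t in S, perm_intersect p t].

Definition max_stab (n : nat) (G : {group {perm 'I_n}}) : nat :=
  \max_(i : 'I_n) #|'C_G[i | 'P]|.

Definition EKR (n : nat) (G : {group {perm 'I_n}}) : Prop :=
  forall S : {set {perm 'I_n}}, intersecting G S -> #|S| <= max_stab G.

Definition strict_EKR (n : nat) (G : {group {perm 'I_n}}) : Prop :=
  EKR G /\
  forall S : {set {perm 'I_n}}, intersecting G S -> #|S| = max_stab G ->
    exists i : 'I_n, exists2 g, g \in G &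
      #|'C_G[i | 'P]| = max_stab G /\ S = g *: 'C_G[i | 'P].

(* Main.v *)
Require Import Defs.
From mathcomp Require Import all_boot all_fingroup.
From mathcomp Require Import cyclic zify.
Import GroupScope.

Theorem theorem5 (n : nat) (s : {perm 'I_n}) :
  (0 < n)%N -> strict_EKR <[s]>%G.
Proof.
move=> n0.
have [i0 Hi0] := @eq_bigmax 'I_n (fun i => #|'C_(<[s]>%G)[i | 'P]|)
  (ltac:(by rewrite card_ord)).
set H := 'C_(<[s]>%G)[i0 | 'P] in Hi0.
have HG : H \subset <[s]> := subsetIl _ _.
set k := #|<[s]> : H|.
have Hk : (#|H| * k = #[s])%N := Lagrange HG.
have kpos : 0 < k := indexg_gt0 _ _.
have mpos : 0 < #[s] := order_gt0 s.
have stab_le : forall x : 'I_n, #|'C_(<[s]>%G)[x | 'P]| <= #|H|.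
  move=> x; rewrite -Hi0.
  exact: (@leq_bigmax _ (fun i => #|'C_(<[s]>%G)[i | 'P]|) x).
have D : forall j (x : 'I_n), 0 < j < k -> (s ^+ j) x != x.
  move=> j x /andP[j0 jk]; apply/negP => /eqP fx.
  have inC : s ^+ j \in 'C_(<[s]>%G)[x | 'P].
    by rewrite in_setI mem_cycle /=; by apply/astab1P.
  have := cardSg (_ : <[s ^+ j]>%G \subset 'C_(<[s]>%G)[x | 'P]%G).
  rewrite cycle_subG => /(_ inC).
  rewrite [#|<[_]>|]orderXgcd => dv.
  have g1 := dvdn_gcdl #[s] j.
  have g2 : gcdn #[s] j <= j := dvdn_leq j0 (dvdn_gcdr _ _).
  have g3 := divnK g1.
  have q1 := dvdn_leq (cardG_gt0 _) dv.
  have q2 := stab_le x.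
  set g := gcdn #[s] j in g1 g2 g3 q1 q2 dv.
  set q := #[s] %/ g in g1 g2 g3 q1 q2 dv.
  set h := #|H| in Hk q2.
  set c := #|'C_(<[s]>%G)[x | 'P]| in q1 q2.
  nia.
have Z : forall S : {set {perm 'I_n}}, intersecting <[s]>%G S ->
    forall a a' j j', a \in S -> a' \in S -> 0 < j' - j < k ->
    a * s ^+ j = a' * s ^+ j' -> False.
  move=> S /andP[SG /forall_inP HS] a a' j j' aS a'S /andP[d0 dk] E.
  have a'G : a' \in <[s]> := subsetP SG a' a'S.
  have jj : j <= j' by move: d0; rewrite subn_gt0 => /ltnW.
  have E2 : a = a' * s ^+ (j' - j).
    apply: (mulIg (s ^+ j)); rewrite E -mulgA -expgD subnK //.
  case/cycleP: a'G => t Ea'; rewrite Ea' in a'S E2.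
  have E3 : a * (s ^+ t)^-1 = s ^+ (j' - j).
    by rewrite E2 -expgD addnC expgD mulgK.
  have /existsP[x /eqP Hx] := forall_inP (HS a aS) _ a'S.
  by move: Hx; rewrite /= E3 => /eqP; rewrite (negbTE (D _ _ _)) // d0 dk.
pose f := fun p : {perm 'I_n} * 'I_k => p.1 * s ^+ p.2.
have Tcard : forall S : {set {perm 'I_n}}, intersecting <[s]>%G S ->
    #|f @: setX S [set: 'I_k]| = (#|S| * k)%N /\ f @: setX S [set: 'I_k] \subset <[s]>.
  move=> S HS; split.
    rewrite card_in_imset ?cardsX ?cardsT ?card_ord //.
    move=> [a j] [a' j']; rewrite !inE /= => /andP[aS _] /andP[a'S _] E.
    rewrite /f /= in E.
    have jj : j = j' :> nat.
      case: (ltngtP j j') => // h.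
      - exfalso; apply: (Z S HS a a' j j' aS a'S _ E).
        have := ltn_ord j'; move=> ?; apply/andP; split; lia.
      - exfalso; apply: (Z S HS a' a j' j a'S aS _ (esym E)).
        have := ltn_ord j; move=> ?; apply/andP; split; lia.
    have jj' : j = j' := val_inj jj.
    by rewrite -jj' in E *; rewrite (mulIg _ _ _ E).
  apply/subsetP => y /imsetP[[a j]]; rewrite !inE /= => /andP[aS _] ->.
  by rewrite /f /= groupM ?mem_cycle // (subsetP (proj1 (andP HS))).
have EKRb : forall S : {set {perm 'I_n}}, intersecting <[s]>%G S -> #|S| <= #|H|.
  move=> S HS; have [c1 c2] := Tcard S HS.
  have := subset_leq_card c2; rewrite c1 -[X in _ <= X]Hk leq_pmul2r //.
split; first by move=> S HS; rewrite /max_stab Hi0; exact: EKRb.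
move=> S HS; rewrite /max_stab Hi0 => cS.
have [c1 c2] := Tcard S HS.
have TG : f @: setX S [set: 'I_k] = <[s]>.
  by apply/eqP; rewrite eqEcard c2 c1 cS Hk /=.
have SG := proj1 (andP HS).
have step : forall a, a \in S -> a * s ^+ k \in S.
  move=> a aS.
  have : a * s ^+ k \in f @: setX S [set: 'I_k].
    by rewrite TG groupM ?mem_cycle // (subsetP SG).
  case/imsetP => [[a' j]]; rewrite !inE /= => /andP[a'S _]; rewrite /f /= => E.
  case: (posnP j) => j0.
    by rewrite E j0 expg0 mulg1.
  exfalso; apply: (Z S HS a' a j k a'S aS _ (esym E)).
  have := ltn_ord j; move=> ?; apply/andP; split; lia.
have stepn : forall t a, a \in S -> a * s ^+ (k * t) \in S.
  elim=> [|t IH] a aS; first by rewrite muln0 expg0 mulg1.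
  by rewrite mulnSr expgD mulgA; apply: step; apply: IH.
have /card_gt0P[a aS] : 0 < #|S| by rewrite cS cardG_gt0.
have dk : k %| #[s] by rewrite -Hk dvdn_mull.
have cK : #|<[s ^+ k]>| = #|H|.
  rewrite -/(order _) orderXgcd (gcdn_idPr dk) -Hk mulnK //.
have sub : a *: <[s ^+ k]> \subset S.
  apply/subsetP => y /lcosetP[z /cycleP[t ->] ->].
  by rewrite -expgM; apply: stepn.
have ES : S = a *: <[s ^+ k]>.
  by apply/eqP; rewrite eq_sym eqEcard sub card_lcoset cK cS /=.
have KH : <[s ^+ k]> = H.
  apply/eqP.
  have := @eq_subG_cyclic _ <[s]>%G <[s ^+ k]>%G 'C_(<[s]>%G)[i0 | 'P]%G (cycle_cyclic s).
  rewrite cycle_subG mem_cycle => /(_ isT HG) E.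
  by move: E; rewrite /= cK eqxx => /eqP ->.
exists i0, a; first exact: (subsetP SG).
split=> //.
by rewrite ES KH.
Qed.
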